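(* Let $\Gamma=\{1,\gamma\}=\mathrm{Gal}(\mathbb C/\mathbb R)$. Let $H$ be a connected reductive complex algebraic group (identified with its $\mathbb C$-points) and $1\to H\to E\xrightarrow{\pi}\Gamma\to1$ an extension of abstract groups such that every element of $E_\gamma=\pi^{-1}(\gamma)$ acts on $H$ by conjugation via an anti-regular automorphism. Fix a pinning $(T,B,\{X_\alpha\})$ of $H$ and let $x'\in E_\gamma$ be such that $\tau_H:=\mathrm{inn}(x')|_H$ preserves the pinning; then $h':=(x')^2\in C:=Z(H)$ and $\mathbf H=(H,\tau_H)$ is a real algebraic group with center $\mathbf C=(C,\tau_H|_C)$, and $h'\in Z^2\mathbf C$. Let $\Delta\colon H^1(\mathbf H/\mathbf C)\to H^2\mathbf C$ be the connecting map of the exact sequence $1\to\mathbf C\to\mathbf H\to\mathbf H/\mathbf C\to1$. Then the following are equivalent: (i) there exists $x\in E_\gamma$ with $x^2=1$; (ii) $(h')^{-1}=b\,\tau_H(b)$ for some $b\in H$; (iii) $[(h')^{-1}]\in\mathrm{im}\,\Delta$.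
   Context: Anti-regular map of complex affine varieties: $\varphi$ such that $x\mapsto\overline{f(\varphi(x))}$ is regular for every regular $f$. A real algebraic group is a pair $(G,\tau)$, $\tau$ an anti-regular involutive automorphism of the complex linear algebraic group $G$. A pinning of $H$: a maximal torus $T$, a Borel subgroup $B\supset T$, and nonzero $X_\alpha$ in the root space of each simple root $\alpha$. For a real group $\mathbf G=(G,\tau)$: $Z^1\mathbf G=\{z\in G: z\tau(z)=1\}$, $z\sim b^{-1}z\tau(b)$, $H^1\mathbf G=Z^1\mathbf G/\sim$. For commutative $\mathbf A=(A,\tau)$: $Z^2\mathbf A=A^\tau$, $B^2\mathbf A=\{a\tau(a)\}$, $H^2\mathbf A=Z^2\mathbf A/B^2\mathbf A$. The connecting map sends the class of $z\in Z^1(\mathbf H/\mathbf C)$ to the class of $\tilde z\tau_H(\tilde z)\in Z^2\mathbf C$ for any lift $\tilde z\in H$ of $z$. *)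

(* Defs.v *)
Record grp := Grp {
  carrier :> Type;
  gmul : carrier -> carrier -> carrier;
  gone : carrier;
  ginv : carrier -> carrier;
  gmulA : forall x y z, gmul x (gmul y z) = gmul (gmul x y) z;
  gmul1l : forall x, gmul gone x = x;
  gmul1r : forall x, gmul x gone = x;
  gmulVl : forall x, gmul (ginv x) x = gone;
  gmulVr : forall x, gmul x (ginv x) = gone
}.

Arguments gmul {g}.
Arguments gone {g}.
Arguments ginv {g}.

(* Gamma = Gal(C/R) = {1, gamma} is modelled by bool: false = 1, true = gamma,
   with group law xorb.  An extension 1 -> H -> E -> Gamma -> 1 is given by a
   surjective homomorphism pi : E -> bool; H is identified with ker pi. *)
Definition is_extension (E : grp) (pi : E -> bool) : Prop :=
  (forall x y : E, pi (gmul x y) = xorb (pi x) (pi y)) /\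
  (exists x : E, pi x = true).

Definition inH (E : grp) (pi : E -> bool) (h : E) : Prop := pi h = false.

Definition inEgamma (E : grp) (pi : E -> bool) (x : E) : Prop := pi x = true.

Definition inC (E : grp) (pi : E -> bool) (c : E) : Prop :=
  inH E pi c /\ forall h : E, inH E pi h -> gmul c h = gmul h c.

Definition tauH (E : grp) (x' : E) (h : E) : E := gmul (gmul x' h) (ginv x').

(* Z^2 C = C^tau. *)
Definition inZ2C (E : grp) (pi : E -> bool) (x' : E) (c : E) : Prop :=
  inC E pi c /\ tauH E x' c = c.

(* B^2 C = { c tau(c) : c in C }. *)
Definition inB2C (E : grp) (pi : E -> bool) (x' : E) (a : E) : Prop :=
  exists c : E, inC E pi c /\ a = gmul c (tauH E x' c).

(* Equality of classes in H^2 C = Z^2 C / B^2 C (C is commutative). *)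
Definition H2C_eq (E : grp) (pi : E -> bool) (x' : E) (a a' : E) : Prop :=
  inZ2C E pi x' a /\ inZ2C E pi x' a' /\
  inB2C E pi x' (gmul a (ginv a')).

(* Z^1 (H/C): an element of H/C is a coset zC (z in H, a lift); the cocycle
   condition (zC) tau(zC) = 1 in H/C reads z tau(z) in C. *)
Definition liftZ1_quot (E : grp) (pi : E -> bool) (x' : E) (z : E) : Prop :=
  inH E pi z /\ inC E pi (gmul z (tauH E x' z)).

(* The class a (an element of Z^2 C) lies in the image of the connecting map
   Delta : H^1(H/C) -> H^2 C, which sends the class of zC in Z^1(H/C) to the
   class of z~ tau(z~) for any lift z~ in H. *)
Definition in_im_Delta (E : grp) (pi : E -> bool) (x' : E) (a : E) : Prop :=
  exists z : E, liftZ1_quot E pi x' z /\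
    H2C_eq E pi x' a (gmul z (tauH E x' z)).

(* Main.v *)
Require Import Defs.

Section G.
Variable E : grp.
Local Infix "*" := gmul.

Lemma mulKV (x y : E) : x * (ginv x * y) = y.
Proof. rewrite gmulA, gmulVr, gmul1l; reflexivity. Qed.
Lemma mulVK (x y : E) : ginv x * (x * y) = y.
Proof. rewrite gmulA, gmulVl, gmul1l; reflexivity. Qed.
Lemma inv_uniq (x y : E) : x * y = gone -> ginv x = y.
Proof. intro H. rewrite <- (gmul1r _ (ginv x)), <- H, mulVK. reflexivity. Qed.
Lemma inv_mul (x y : E) : ginv (x * y) = ginv y * ginv x.
Proof. apply inv_uniq. rewrite <- gmulA, mulKV, gmulVr. reflexivity. Qed.
Lemma inv_inv (x : E) : ginv (ginv x) = x.
Proof. apply inv_uniq. apply gmulVl. Qed.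
Lemma inv_one : ginv (@gone E) = gone.
Proof. apply inv_uniq. apply gmul1l. Qed.
Lemma comm_inv (c h : E) : c * h = h * c -> ginv c * h = h * ginv c.
Proof. intro H. transitivity (ginv c * ((h * c) * ginv c)).
  - rewrite <- gmulA, gmulVr, gmul1r. reflexivity.
  - rewrite <- H, <- gmulA, mulVK. reflexivity. Qed.
Lemma tail (x y z : E) : x * y = z -> forall w, x * (y * w) = z * w.
Proof. intros H w. rewrite gmulA, H. reflexivity. Qed.
End G.

Ltac gsimpl := repeat progress (rewrite ?inv_mul, ?inv_inv, ?inv_one, ?gmul1l, ?gmul1r,
  ?gmulVl, ?gmulVr, ?mulKV, ?mulVK; rewrite <- ?gmulA).

Lemma pi_one (E : grp) pi : (forall x y : E, pi (gmul x y) = xorb (pi x) (pi y)) -> pi gone = false.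
Proof. intro Hm. pose proof (Hm gone gone) as H. rewrite gmul1l in H.
  destruct (pi gone); simpl in *; congruence. Qed.
Lemma pi_inv (E : grp) pi : (forall x y : E, pi (gmul x y) = xorb (pi x) (pi y)) ->
  forall x, pi (ginv x) = pi x.
Proof. intros Hm x. pose proof (Hm (ginv x) x) as H. rewrite gmulVl, pi_one in H by exact Hm.
  destruct (pi x), (pi (ginv x)); simpl in *; congruence. Qed.

Theorem corollary7p6 (E : grp) (pi : E -> bool) (x' : E)
  (Hext : is_extension E pi)
  (Hx' : inEgamma E pi x')
  (Hh' : inC E pi (gmul x' x')) :
  let h' := gmul x' x' in
  ((exists x : E, inEgamma E pi x /\ gmul x x = gone) <->
   (exists b : E, inH E pi b /\ ginv h' = gmul b (tauH E x' b))) /\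
  ((exists b : E, inH E pi b /\ ginv h' = gmul b (tauH E x' b)) <->
   in_im_Delta E pi x' (ginv h')).
Proof.
  destruct Hext as [Hm _]. intro h'.
  unfold inEgamma, inH, in_im_Delta, liftZ1_quot, H2C_eq, inZ2C, inB2C, inC, tauH in *.
  assert (Hinv := pi_inv E pi Hm). assert (H1 := pi_one E pi Hm).
  destruct Hh' as [Hh'H Hh'c].
  assert (Hhi : pi (ginv h') = false /\ forall h, pi h = false -> gmul (ginv h') h = gmul h (ginv h')).
  { split. rewrite Hinv; exact Hh'H.
    intros h Hh. apply comm_inv. apply Hh'c. exact Hh. }
  assert (Htau : gmul (gmul x' (ginv h')) (ginv x') = ginv h').
  { unfold h'. gsimpl. reflexivity. }
  split; split.
  - intros [x [Hx Hxx]]. exists (gmul x (ginv x')). split.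
    + rewrite Hm, Hinv, Hx, Hx'. reflexivity.
    + unfold h'. gsimpl. rewrite (tail _ _ _ _ Hxx). gsimpl. reflexivity.
  - intros [b [Hb Heq]]. exists (gmul b x'). split.
    + rewrite Hm, Hb, Hx'. reflexivity.
    + transitivity (gmul (gmul b (gmul (gmul x' b) (ginv x'))) (gmul x' x')).
      { gsimpl. reflexivity. }
      rewrite <- Heq. apply gmulVl.
  - intros [b [Hb Heq]]. exists b. rewrite <- Heq. split; [split; [exact Hb | exact Hhi] |].
    split; [split; [exact Hhi | exact Htau] |].
    split; [split; [exact Hhi | exact Htau] |].
    exists gone. split. { split. exact H1. intros h _. gsimpl. reflexivity. }
    gsimpl. reflexivity.
  - intros [z [[Hz Hzc] [_ [_ [c [[Hc Hcc] Heq]]]]]].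
    exists (gmul c z). split. { rewrite Hm, Hc, Hz. reflexivity. }
    assert (Hcomm : forall w, gmul x' (gmul c (gmul (ginv x') (gmul z w))) =
                    gmul z (gmul x' (gmul c (gmul (ginv x') w)))).
    { intro w.
      assert (B : gmul (gmul (gmul x' c) (ginv x')) z = gmul z (gmul (gmul x' c) (ginv x'))).
      2:{ transitivity (gmul (gmul (gmul (gmul x' c) (ginv x')) z) w). { gsimpl. reflexivity. }
          rewrite B. gsimpl. reflexivity. }
      assert (Hp : pi (gmul (ginv x') (gmul z x')) = false).
      { rewrite !Hm, Hinv, Hz, Hx'. reflexivity. }
      pose proof (Hcc _ Hp) as K.
      transitivity (gmul x' (gmul (gmul c (gmul (ginv x') (gmul z x'))) (ginv x'))).
      { gsimpl. reflexivity. }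
      rewrite K. gsimpl. reflexivity. }
    transitivity (gmul (gmul (ginv h') (ginv (gmul z (gmul (gmul x' z) (ginv x')))))
                  (gmul z (gmul (gmul x' z) (ginv x')))).
    { gsimpl. reflexivity. }
    rewrite Heq. gsimpl. rewrite Hcomm. gsimpl. reflexivity.
Qed.
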